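(* In the setting below, if there is a subinterval $[t_1,t_2]\subset(0,1]$ with $t_1<t_2$ on which $Z_1(t)$ stays on one of the coordinate axes, then both $Z_1(t)$ and $Z_2(t)$ stay on the coordinate axes (each on an axis) for all $t\in(0,1]$.
   Context: Planar three-body problem with masses $m_1=m_2=m_3=1$, $\chi=\{q=(q_1,q_2,q_3)\in(\mathbb{R}^2)^3: q_1+q_2+q_3=0\}$, action $\mathcal{A}(q)=\int_0^1\big(\tfrac12\sum|\dot q_i|^2+\sum_{i<j}\frac{1}{|q_i-q_j|}\big)dt$. Let $Q_{S_4}=\{q: q_1=q_2=(-a_2,0),\ q_3=(2a_2,0),\ a_2\ge0\}$ and $Q_{E_1}=\{q: q_1=(0,-2b_1),\ q_2=(-b_2,b_1),\ q_3=(b_2,b_1),\ b_1,b_2\in\mathbb{R}\}$. Let $q$ minimize $\mathcal{A}$ over $\{q\in H^1([0,1],\chi): q(0)\in Q_{S_4},\ q(1)\in Q_{E_1}\}$; it is collision-free for $t\in(0,1]$ and there satisfies Newton's equations $\ddot q_i=\sum_{j\ne i}\frac{q_j-q_i}{|q_j-q_i|^3}$. Jacobi coordinates: $Z_1=q_1-q_2$, $Z_2=q_3-\frac{q_1+q_2}{2}$. *)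

(* Defs.v *)
From HB Require Import structures.
From mathcomp Require Import all_boot all_order all_algebra.
From mathcomp Require Import all_classical all_reals all_analysis.
Set Implicit Arguments. Unset Strict Implicit. Unset Printing Implicit Defensive.
Import Order.TTheory GRing.Theory Num.Theory.
Import numFieldNormedType.Exports.
Local Open Scope classical_set_scope.
Local Open Scope ring_scope.

Section ThreeBody.
Variable R : realType.

Definition pt := (R * R)%type.
Definition psub (a b : pt) : pt := (a.1 - b.1, a.2 - b.2).
Definition normsq (a : pt) : R := a.1 ^+ 2 + a.2 ^+ 2.
Definition dist (a b : pt) : R := Num.sqrt (normsq (psub a b)).

(* scalar H^1([0,1]) function f with weak derivative g (g in L^2(0,1)) *)
Definition H1fun (f g : R -> R) : Prop :=
  measurable_fun `[(0%R:R), (1%R:R)]%classic g /\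
  (\int[@lebesgue_measure R]_(x in `[(0%R:R), (1%R:R)]%classic) ((g x) ^+ 2)%R%:E < +oo)%E /\
  forall t, 0 <= t <= 1 ->
    (f t)%:E = ((f (0%R:R))%:E + \int[@lebesgue_measure R]_(x in `[(0%R:R), t]%classic) (g x)%:E)%E.

Definition H1pt (q v : R -> pt) : Prop :=
  H1fun (fun t => (q t).1) (fun t => (v t).1) /\
  H1fun (fun t => (q t).2) (fun t => (v t).2).

Definition pot (a b : pt) : \bar R :=
  if dist a b == 0 then +oo%E else ((dist a b)^-1)%:E.

(* Lagrangian (masses 1) *)
Definition lagr (a1 a2 a3 w1 w2 w3 : pt) : \bar R :=
  ((2^-1 * (normsq w1 + normsq w2 + normsq w3))%:E
   + pot a1 a2 + pot a1 a3 + pot a2 a3)%E.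

Definition action (q1 q2 q3 v1 v2 v3 : R -> pt) : \bar R :=
  \int[@lebesgue_measure R]_(t in `[(0%R:R), (1%R:R)]%classic)
     lagr (q1 t) (q2 t) (q3 t) (v1 t) (v2 t) (v3 t).

Definition in_chi (a1 a2 a3 : pt) : Prop :=
  a1.1 + a2.1 + a3.1 = 0 /\ a1.2 + a2.2 + a3.2 = 0.

Definition in_QS4 (a1 a2 a3 : pt) : Prop :=
  exists c : R, 0 <= c /\ a1 = (- c, 0) /\ a2 = (- c, 0) /\ a3 = (2 * c, 0).

Definition in_QE1 (a1 a2 a3 : pt) : Prop :=
  exists b1 b2 : R, a1 = (0, - (2 * b1)) /\ a2 = (- b2, b1) /\ a3 = (b2, b1).

(* admissible paths: H^1([0,1], chi) with q(0) in Q_{S_4}, q(1) in Q_{E_1};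
   v1 v2 v3 are (representatives of) the weak derivatives *)
Definition admissible (q1 q2 q3 v1 v2 v3 : R -> pt) : Prop :=
  H1pt q1 v1 /\ H1pt q2 v2 /\ H1pt q3 v3 /\
  (forall t, 0 <= t <= 1 -> in_chi (q1 t) (q2 t) (q3 t)) /\
  in_QS4 (q1 0) (q2 0) (q3 0) /\ in_QE1 (q1 1) (q2 1) (q3 1).

Definition action_minimizer (q1 q2 q3 : R -> pt) : Prop :=
  exists v1 v2 v3, admissible q1 q2 q3 v1 v2 v3 /\
    forall p1 p2 p3 w1 w2 w3, admissible p1 p2 p3 w1 w2 w3 ->
      (action q1 q2 q3 v1 v2 v3 <= action p1 p2 p3 w1 w2 w3)%E.

Definition acc (a b c : pt) : pt :=
  ((b.1 - a.1) / (dist a b) ^+ 3 + (c.1 - a.1) / (dist a c) ^+ 3,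
   (b.2 - a.2) / (dist a b) ^+ 3 + (c.2 - a.2) / (dist a c) ^+ 3).

Definition second_deriv_at (f : R -> R) (t F : R) : Prop :=
  derivable f t 1 /\ derivable (derive1 f) t 1 /\ derive1 (derive1 f) t = F.

Definition newton_at (q : R -> pt) (F : pt) (t : R) : Prop :=
  second_deriv_at (fun s => (q s).1) t F.1 /\
  second_deriv_at (fun s => (q s).2) t F.2.

Definition newton (q1 q2 q3 : R -> pt) (t : R) : Prop :=
  newton_at q1 (acc (q1 t) (q2 t) (q3 t)) t /\
  newton_at q2 (acc (q2 t) (q1 t) (q3 t)) t /\
  newton_at q3 (acc (q3 t) (q1 t) (q2 t)) t.

Definition collision_free_at (q1 q2 q3 : R -> pt) (t : R) : Prop :=
  q1 t <> q2 t /\ q1 t <> q3 t /\ q2 t <> q3 t.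

Definition Z1 (q1 q2 : R -> pt) (t : R) : pt := psub (q1 t) (q2 t).
Definition Z2 (q1 q2 q3 : R -> pt) (t : R) : pt :=
  ((q3 t).1 - ((q1 t).1 + (q2 t).1) / 2, (q3 t).2 - ((q1 t).2 + (q2 t).2) / 2).

Definition stays_on_axis (z : R -> pt) (P : R -> Prop) : Prop :=
  (forall t, P t -> (z t).2 = 0) \/ (forall t, P t -> (z t).1 = 0).

End ThreeBody.

(* Main.v *)
Require Import Defs.
From HB Require Import structures.
From mathcomp Require Import all_boot all_order all_algebra.
From mathcomp Require Import all_classical all_reals all_analysis.
From mathcomp Require Import ring lra.
Import Order.TTheory GRing.Theory Num.Theory.
Import numFieldNormedType.Exports.
Local Open Scope classical_set_scope.
Local Open Scope ring_scope.
Import measurable_realfun.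

Section S.
Context {R : realType}.
Notation mu := (@lebesgue_measure R).

Lemma L2_integrable (g : R -> R) :
  measurable_fun `[(0%R:R), (1%R:R)]%classic g ->
  (\int[mu]_(x in `[(0%R:R), (1%R:R)]%classic) ((g x) ^+ 2)%R%:E < +oo)%E ->
  mu.-integrable `[0, 1] (EFin \o g).
Proof.
move=> mg fin; apply/integrableP; split; first exact/measurable_realfun.measurable_EFinP.
have mg2 : measurable_fun `[(0%R:R), (1%R:R)]%classic (fun x => (g x) ^+ 2).
  exact: measurable_realfun.measurable_funX.
apply: (@le_lt_trans _ _ (\int[mu]_(x in `[(0%R:R), (1%R:R)]%classic) ((1%:E) + ((g x) ^+ 2)%:E))%E).
  apply: ge0_le_integral => //.
  - apply: measurableT_comp => //=; exact/measurable_realfun.measurable_EFinP.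
  - apply: emeasurable_funD => //; exact/measurable_realfun.measurable_EFinP.
  move=> x _ /=; rewrite -EFinD lee_fin.
  have := sqr_ge0 (`|g x| - 1); rewrite -[g x ^+ 2]real_normK ?num_real//; have := normr_ge0 (g x); nra.
rewrite ge0_integralD //; last 2 first.
  - by move=> x _; rewrite lee_fin sqr_ge0.
  - exact/measurable_realfun.measurable_EFinP.
rewrite integral_cst //= lebesgue_measure_itv /= lte_fin ltr01 oppr0 adde0 mul1e.
by apply: lte_add_pinfty => //; rewrite ltey.
Qed.
Lemma H1_left (f g : R -> R) : H1fun f g -> f x @[x --> 1^'-] --> f 1.
Proof.
case=> mg [fin feq]; have ig := L2_integrable g mg fin.
have E t : 0 <= t <= 1 -> f t = f 0 + parameterized_integral mu 0 t g.
  move=> /andP[t0 t1]; apply/EFin_inj; rewrite (feq t) ?t0 ?t1 // EFinD.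
  rewrite /parameterized_integral /Rintegral fineK //.
  apply: integrable_fin_num => //.
  apply: (@integrableS _ _ _ mu `[0,1] `[0,t] (EFin \o g)) => //.
  by apply: subset_itvl; rewrite bnd_simp.
have h := parameterized_integral_cvg_at_left ltr01 ig.
rewrite (E 1) ?ler01 ?lexx //.
apply: cvg_trans; last exact: (cvgD (cvg_cst (f 0)) h).
apply: near_eq_cvg; near=> x.
rewrite [f x]E //; apply/andP; split; apply: ltW.
  by near: x; exact: nbhs_left_gt.
by near: x; exact: nbhs_left_lt.
Unshelve. all: by end_near. Qed.
Lemma dlin (K s : R) : is_derive s 1 (fun x : R => K * x) K.
Proof.
have := @is_deriveZ R R R id K s 1 1 (is_derive_id s 1).
by move=> H; apply: (is_derive_eq H); rewrite /GRing.scale /= mulr1.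
Qed.
Lemma dexpw (K s : R) : is_derive s 1 (fun x : R => expR (K * x)) (expR (K * s) * K).
Proof.
have := @is_derive1_comp R expR (fun x : R => K * x) s (expR (K * s)) K (is_derive_expR _) (dlin K s).
by [].
Qed.
Lemma deriv_nonpos_le (F dF : R -> R) (a b : R) : a <= b ->
  (forall s, a <= s <= b -> is_derive s 1 F (dF s)) ->
  (forall s, a < s < b -> dF s <= 0) -> F b <= F a.
Proof.
move=> ab hD dF0.
have D s : s \in `[a, b]%R -> is_derive s 1 F (dF s).
  by rewrite in_itv/= => /andP[? ?]; apply: hD; apply/andP.
apply: (@ler0_derive1_le_cc _ F a b) => //.
- move=> x; rewrite in_itv/= => /andP[ax xb].
  have Dx := D x ltac:(rewrite in_itv/= !ltW //).
  exact: (@ex_derive _ _ _ _ _ _ _ Dx).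
- move=> x; rewrite in_itv/= => /andP[ax xb].
  have Dx := D x ltac:(rewrite in_itv/= !ltW //).
  by rewrite derive1E (@derive_val _ _ _ _ _ _ _ Dx); apply: dF0; apply/andP.
- apply: derivable_within_continuous => x /D Dx; exact: (@ex_derive _ _ _ _ _ _ _ Dx).
- by rewrite in_itv/= lexx ab.
- by rewrite in_itv/= lexx ab.
Qed.

Lemma deriv_nonneg_le (F dF : R -> R) (a b : R) : a <= b ->
  (forall s, a <= s <= b -> is_derive s 1 F (dF s)) ->
  (forall s, a < s < b -> 0 <= dF s) -> F a <= F b.
Proof.
move=> ab hD dF0.
rewrite -lerN2; apply: (@deriv_nonpos_le (fun s => - F s) (fun s => - dF s)) => //.
  by move=> s /hD Ds; apply: is_deriveN.
by move=> s /dF0; rewrite oppr_le0.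
Qed.

Lemma bound_on (c : R -> R) (a b : R) : a <= b ->
  (forall s, a <= s <= b -> {for s, continuous c}) ->
  exists M, 0 <= M /\ forall s, a <= s <= b -> `|c s| <= M.
Proof.
move=> ab cc.
have [x xab hx] : exists2 x, x \in `[a, b]%R & forall t, t \in `[a, b]%R -> `|c t| <= `|c x|.
  apply: (@EVT_max R (fun s => `|c s|) a b ab).
  apply: continuous_in_subspaceT => s; rewrite inE /= in_itv /= => sab.
  apply: continuous_comp; first exact: cc.
  exact: norm_continuous.
exists `|c x|; split => // s sab; apply: hx; by rewrite in_itv.
Qed.
Lemma prodbound (c x y M : R) : `|c| <= M -> `|c * x * y| <= M * (x ^+ 2 + y ^+ 2) / 2.
Proof.
move=> cM.
have hx : x ^+ 2 = `|x| ^+ 2 by rewrite real_normK ?num_real.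
have hy : y ^+ 2 = `|y| ^+ 2 by rewrite real_normK ?num_real.
rewrite !normrM hx hy.
have := normr_ge0 x; have := normr_ge0 y; have := normr_ge0 c.
have := sqr_ge0 (`|x| - `|y|).
nra.
Qed.

Lemma energy_core (f fp g gp c11 c12 c21 c22 : R -> R) (a b : R) :
  0 < a -> a <= b -> b < 1 ->
  (forall t : R, 0 < t < 1 -> is_derive t 1 f (fp t)) ->
  (forall t : R, 0 < t < 1 -> is_derive t 1 g (gp t)) ->
  (forall t : R, 0 < t < 1 -> is_derive t 1 fp (c11 t * f t + c12 t * g t)) ->
  (forall t : R, 0 < t < 1 -> is_derive t 1 gp (c21 t * f t + c22 t * g t)) ->
  (forall t : R, 0 < t < 1 -> {for t, continuous c11}) ->
  (forall t : R, 0 < t < 1 -> {for t, continuous c12}) ->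
  (forall t : R, 0 < t < 1 -> {for t, continuous c21}) ->
  (forall t : R, 0 < t < 1 -> {for t, continuous c22}) ->
  let E := fun s => f s ^+ 2 + fp s ^+ 2 + g s ^+ 2 + gp s ^+ 2 in
  (E a = 0 -> E b = 0) /\ (E b = 0 -> E a = 0).
Proof.
move=> a0 ab b1 Df Dg Dfp Dgp C11 C12 C21 C22 E.
have in01 s : a <= s <= b -> 0 < s < 1.
  by case/andP=> h1 h2; apply/andP; split; [exact: lt_le_trans h1|exact: le_lt_trans b1].
have [M11 [M11p B11]] := bound_on _ _ _ ab (fun s hs => C11 s (in01 s hs)).
have [M12 [M12p B12]] := bound_on _ _ _ ab (fun s hs => C12 s (in01 s hs)).
have [M21 [M21p B21]] := bound_on _ _ _ ab (fun s hs => C21 s (in01 s hs)).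
have [M22 [M22p B22]] := bound_on _ _ _ ab (fun s hs => C22 s (in01 s hs)).
pose M := M11 + M12 + M21 + M22.
pose K := 1 + 2 * M.
pose dE := fun s : R => 2 * (f s * fp s + fp s * (c11 s * f s + c12 s * g s) + g s * gp s
   + gp s * (c21 s * f s + c22 s * g s)).
have DE (s : R) : 0 < s < 1 -> is_derive s 1 E (dE s).
  move=> hs; have := Df s hs; have := Dg s hs; have := Dfp s hs; have := Dgp s hs.
  move=> H1 H2 H3 H4.
  have : is_derive s 1 (f ^+ 2 + fp ^+ 2 + g ^+ 2 + gp ^+ 2) 
     ((2%:R * f s ^+ 1) *: fp s + (2%:R * fp s ^+ 1) *: (c11 s * f s + c12 s * g s)
      + (2%:R * g s ^+ 1) *: gp s + (2%:R * gp s ^+ 1) *: (c21 s * f s + c22 s * g s)).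
    by apply: is_deriveD.
  move=> H; apply: (is_derive_eq H).
  rewrite /dE /= !expr1 -![_ *: _]/(_ * _); ring.
have Kp : 0 <= K by rewrite /K /M; apply: addr_ge0 => //; apply: mulr_ge0 => //; rewrite !addr_ge0.
have Eg0 s : 0 <= E s by rewrite /E !addr_ge0 // sqr_ge0.
have BE s : a <= s <= b -> `|dE s| <= K * E s.
  move=> hs.
  have n1 : `|1 : R| <= 1 by rewrite normr1.
  have h1 := prodbound 1 (f s) (fp s) 1 n1.
  have h2 := prodbound (c11 s) (fp s) (f s) M11 (B11 s hs).
  have h3 := prodbound (c12 s) (fp s) (g s) M12 (B12 s hs).
  have h4 := prodbound 1 (g s) (gp s) 1 n1.
  have h5 := prodbound (c21 s) (gp s) (f s) M21 (B21 s hs).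
  have h6 := prodbound (c22 s) (gp s) (g s) M22 (B22 s hs).
  move: h1 h2 h3 h4 h5 h6; rewrite !ler_norml => /andP[l1 u1] /andP[l2 u2]
    /andP[l3 u3] /andP[l4 u4] /andP[l5 u5] /andP[l6 u6].
  have := sqr_ge0 (f s); have := sqr_ge0 (fp s); have := sqr_ge0 (g s); have := sqr_ge0 (gp s).
  move=> q1 q2 q3 q4.
  have P11 := mulr_ge0 M11p q1; have P12 := mulr_ge0 M11p q2; have P13 := mulr_ge0 M11p q3; have P14 := mulr_ge0 M11p q4.
  have P21 := mulr_ge0 M12p q1; have P22 := mulr_ge0 M12p q2; have P23 := mulr_ge0 M12p q3; have P24 := mulr_ge0 M12p q4.
  have P31 := mulr_ge0 M21p q1; have P32 := mulr_ge0 M21p q2; have P33 := mulr_ge0 M21p q3; have P34 := mulr_ge0 M21p q4.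
  have P41 := mulr_ge0 M22p q1; have P42 := mulr_ge0 M22p q2; have P43 := mulr_ge0 M22p q3; have P44 := mulr_ge0 M22p q4.
  rewrite /dE /E /K /M; apply/andP; split; lra.
have DF (c s : R) : a <= s <= b -> is_derive s 1 (fun x => E x * expR (c * x))
   (expR (c * s) * (dE s + c * E s)).
  move=> hs; have H1 := DE s (in01 s hs); have H2 := dexpw c s.
  have := is_deriveM H1 H2.
  move=> H; apply: (is_derive_eq H); rewrite -![_ *: _]/(_ * _); ring.
have Ee s : E s * expR (- K * s) = 0 -> E s = 0.
  by move/eqP; rewrite mulf_eq0 (gt_eqF (expR_gt0 _)) orbF => /eqP.
have Ee' s : E s * expR (K * s) = 0 -> E s = 0.
  by move/eqP; rewrite mulf_eq0 (gt_eqF (expR_gt0 _)) orbF => /eqP.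
split => [Ea|Eb].
- apply: (Ee b); apply/eqP; rewrite eq_le mulr_ge0 ?Eg0 ?expR_ge0 // andbT.
  have <- : E a * expR (- K * a) = 0 by rewrite Ea mul0r.
  apply: (deriv_nonpos_le _ _ _ _ ab (DF (- K))) => s hs.
  have hs' : a <= s <= b by case/andP: hs => h1 h2; rewrite !ltW.
  have := BE s hs'; rewrite ler_norml => /andP[_ h].
  rewrite pmulr_rle0 ?expR_gt0 //; lra.
- apply: (Ee' a); apply/eqP; rewrite eq_le mulr_ge0 ?Eg0 ?expR_ge0 // andbT.
  have <- : E b * expR (K * b) = 0 by rewrite Eb mul0r.
  apply: (deriv_nonneg_le _ _ _ _ ab (DF K)) => s hs.
  have hs' : a <= s <= b by case/andP: hs => h1 h2; rewrite !ltW.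
  have := BE s hs'; rewrite ler_norml => /andP[h _].
  rewrite pmulr_rge0 ?expR_gt0 //; lra.
Qed.

Lemma ulem (f fp g gp c11 c12 c21 c22 : R -> R) (t0 : R) :
  (forall t : R, 0 < t < 1 -> is_derive t 1 f (fp t)) ->
  (forall t : R, 0 < t < 1 -> is_derive t 1 g (gp t)) ->
  (forall t : R, 0 < t < 1 -> is_derive t 1 fp (c11 t * f t + c12 t * g t)) ->
  (forall t : R, 0 < t < 1 -> is_derive t 1 gp (c21 t * f t + c22 t * g t)) ->
  (forall t : R, 0 < t < 1 -> {for t, continuous c11}) ->
  (forall t : R, 0 < t < 1 -> {for t, continuous c12}) ->
  (forall t : R, 0 < t < 1 -> {for t, continuous c21}) ->
  (forall t : R, 0 < t < 1 -> {for t, continuous c22}) ->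
  0 < t0 < 1 -> f t0 = 0 -> fp t0 = 0 -> g t0 = 0 -> gp t0 = 0 ->
  forall t : R, 0 < t < 1 -> f t = 0 /\ g t = 0.
Proof.
move=> Df Dg Dfp Dgp C11 C12 C21 C22 /andP[t00 t01] f0 fp0 g0 gp0 t /andP[t0' t1'].
have Et : f t ^+ 2 + fp t ^+ 2 + g t ^+ 2 + gp t ^+ 2 = 0.
  have E0 : f t0 ^+ 2 + fp t0 ^+ 2 + g t0 ^+ 2 + gp t0 ^+ 2 = 0.
    by rewrite f0 fp0 g0 gp0 expr0n /= !addr0.
  case: (leP t t0) => h.
  - by have [_ +] := energy_core _ _ _ _ _ _ _ _ _ _ t0' h t01 Df Dg Dfp Dgp C11 C12 C21 C22; apply.
  - by have [+ _] := energy_core _ _ _ _ _ _ _ _ _ _ t00 (ltW h) t1' Df Dg Dfp Dgp C11 C12 C21 C22; apply.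
have q1 := sqr_ge0 (f t); have q2 := sqr_ge0 (fp t); have q3 := sqr_ge0 (g t); have q4 := sqr_ge0 (gp t).
have F : f t ^+ 2 = 0 by lra.
have G : g t ^+ 2 = 0 by lra.
by split; apply/eqP; rewrite -sqrf_eq0; apply/eqP.
Qed.

Lemma lim1_zero (h : R -> R) : h x @[x --> 1^'-] --> h 1 ->
  (forall x : R, 0 < x < 1 -> h x = 0) -> h 1 = 0.
Proof.
move=> hc h0.
have : h x @[x --> 1^'-] --> (0 : R).
  apply: cvg_near_cst; near=> x; rewrite h0 //; apply/andP; split.
    by near: x; exact: nbhs_left_gt.
  by near: x; exact: nbhs_left_lt.
move=> h0'; exact: (norm_cvg_unique hc h0').
Unshelve. all: by end_near. Qed.
End S.

Section H.
Context {R : realType}.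

Lemma dist_sym (a b : pt R) : dist a b = dist b a.
Proof. by rewrite /dist /normsq /psub /=; congr Num.sqrt; ring. Qed.

Lemma normsq_ge0 (a : pt R) : 0 <= normsq a.
Proof. by rewrite /normsq addr_ge0 // sqr_ge0. Qed.

Lemma dist_sq (a b : pt R) : dist a b ^+ 2 = (a.1 - b.1) ^+ 2 + (a.2 - b.2) ^+ 2.
Proof. by rewrite /dist sqr_sqrtr // normsq_ge0. Qed.

Lemma dist_pos (a b : pt R) : a <> b -> 0 < dist a b.
Proof.
move=> ab; rewrite /dist sqrtr_gt0 lt_def normsq_ge0 andbT.
apply/eqP => h; apply: ab.
have h1 := sqr_ge0 (a.1 - b.1); have h2 := sqr_ge0 (a.2 - b.2).
move: h; rewrite /normsq /psub /= => h.
have e1 : (a.1 - b.1) ^+ 2 = 0 by lra.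
have e2 : (a.2 - b.2) ^+ 2 = 0 by lra.
move/eqP: e1; rewrite sqrf_eq0 subr_eq0 => /eqP e1.
move/eqP: e2; rewrite sqrf_eq0 subr_eq0 => /eqP e2.
by case: a b e1 e2 {h h1 h2} => [? ?] [? ?] /= -> ->.
Qed.

Lemma deriv_unique (f : R -> R) (t a b : R) :
  is_derive t 1 f a -> is_derive t 1 f b -> a = b.
Proof.
by move=> Ha Hb; rewrite -(@derive_val _ _ _ _ _ _ _ Ha) (@derive_val _ _ _ _ _ _ _ Hb).
Qed.

Lemma deriv_near0 (f : R -> R) (t a : R) :
  (\forall s \near t, f s = 0) -> is_derive t 1 f a -> a = 0.
Proof.
move=> hn Ha.
have Hc : is_derive t 1 (fun _ : R => (0:R)) a.
  apply: near_eq_is_derive Ha; by near do rewrite (near hn _) //.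
exact: (deriv_unique _ _ _ _ Hc (is_derive_cst (0:R) t 1)).
Unshelve. all: by end_near. Qed.

Lemma der_cont (f : R -> R) (t d : R) : is_derive t 1 f d -> {for t, continuous f}.
Proof.
move=> H; apply: differentiable_continuous; apply/derivable1_diffP.
exact: (@ex_derive _ _ _ _ _ _ _ H).
Qed.

Lemma sd_is (f : R -> R) (t F : R) : second_deriv_at f t F ->
  is_derive t 1 f (derive1 f t) /\ is_derive t 1 (derive1 f) F.
Proof.
case=> d1 [d2 e]; split; first by rewrite derive1E; exact: derivableP.
by rewrite -e derive1E; exact: derivableP.
Qed.

Lemma near_neq0 (f : R -> R) (t : R) : {for t, continuous f} -> f t != 0 ->
  \forall s \near t, f s != 0.
Proof.
move=> hc ht.
have ft0 : 0 < `|f t| by rewrite normr_gt0.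
have hn := (cvgrPdist_lt f (f t)).1 hc _ ft0.
have {}hn : \forall s \near t, `|f t - f s| < `|f t| by exact: hn.
move: hn; apply: filterS => s; apply: contraTneq => ->; by rewrite subr0 ltxx.
Qed.

Lemma cC (c t : R) : {for t, continuous (fun _ : R => c)}.
Proof. exact: cst_continuous. Qed.
Lemma cD (f g : R -> R) (t : R) : {for t, continuous f} -> {for t, continuous g} ->
  {for t, continuous (fun x => f x + g x)}.
Proof. exact: continuousD. Qed.
Lemma cB (f g : R -> R) (t : R) : {for t, continuous f} -> {for t, continuous g} ->
  {for t, continuous (fun x => f x - g x)}.
Proof. exact: continuousB. Qed.
Lemma cM (f g : R -> R) (t : R) : {for t, continuous f} -> {for t, continuous g} ->
  {for t, continuous (fun x => f x * g x)}.
Proof. exact: continuousM. Qed.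
Lemma cN (f : R -> R) (t : R) : {for t, continuous f} ->
  {for t, continuous (fun x => - f x)}.
Proof. exact: continuousN. Qed.
Lemma cX (f : R -> R) (n : nat) (t : R) : {for t, continuous f} ->
  {for t, continuous (fun x => f x ^+ n)}.
Proof.
move=> h; elim: n => [|n IH]; first exact: cC.
have -> : (fun x => f x ^+ n.+1) = (fun x => f x * f x ^+ n).
  by apply/funext => x; rewrite exprS.
exact: cM.
Qed.
Lemma cV (f : R -> R) (t : R) : f t != 0 -> {for t, continuous f} ->
  {for t, continuous (fun x => (f x)^-1)}.
Proof. exact: continuousV. Qed.
Lemma cS (f : R -> R) (t : R) : {for t, continuous f} ->
  {for t, continuous (fun x => Num.sqrt (f x))}.
Proof. move=> h; exact: (continuous_comp h (@sqrt_continuous R (f t))). Qed.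
End H.
Section CT.
Context {R : realType}.
Definition ct (f : R -> R) (t : R) := {for t, continuous f}.
Lemma ctC (c t : R) : ct (fun _ : R => c) t. Proof. exact: cC. Qed.
Lemma ctD (f g : R -> R) (t : R) : ct f t -> ct g t -> ct (fun x => f x + g x) t.
Proof. exact: cD. Qed.
Lemma ctB (f g : R -> R) (t : R) : ct f t -> ct g t -> ct (fun x => f x - g x) t.
Proof. exact: cB. Qed.
Lemma ctM (f g : R -> R) (t : R) : ct f t -> ct g t -> ct (fun x => f x * g x) t.
Proof. exact: cM. Qed.
Lemma ctN (f : R -> R) (t : R) : ct f t -> ct (fun x => - f x) t.
Proof. exact: cN. Qed.
Lemma ctX (f : R -> R) (n : nat) (t : R) : ct f t -> ct (fun x => f x ^+ n) t.
Proof. exact: cX. Qed.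
Lemma ctE (f : R -> R) (t : R) : ct f t -> {for t, continuous f}. Proof. by []. Qed.
Lemma ctI (f : R -> R) (t : R) : {for t, continuous f} -> ct f t. Proof. by []. Qed.
End CT.
Global Opaque ct.

Section Core.
Variable R : realType.
Variables q1 q2 q3 : R -> pt R.
Hypothesis HC : forall t : R, 0 < t <= 1 -> collision_free_at q1 q2 q3 t.
Hypothesis HN : forall t : R, 0 < t < 1 -> newton q1 q2 q3 t.

Definition x1 t := (q1 t).1.
Definition x2 t := (q2 t).1.
Definition x3 t := (q3 t).1.
Definition y1 t := (q1 t).2.
Definition y2 t := (q2 t).2.
Definition y3 t := (q3 t).2.
Definition r12 t := dist (q1 t) (q2 t).
Definition r13 t := dist (q1 t) (q3 t).
Definition r23 t := dist (q2 t) (q3 t).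
Definition A12 t := (r12 t ^+ 3)^-1.
Definition A13 t := (r13 t ^+ 3)^-1.
Definition A23 t := (r23 t ^+ 3)^-1.
Definition H t := (r13 t ^+ 2 + r23 t ^+ 2 + r13 t * r23 t) /
  ((r13 t + r23 t) * r13 t ^+ 3 * r23 t ^+ 3).
Definition ax1 t := (x2 t - x1 t) * A12 t + (x3 t - x1 t) * A13 t.
Definition ax2 t := (x1 t - x2 t) * A12 t + (x3 t - x2 t) * A23 t.
Definition ax3 t := (x1 t - x3 t) * A13 t + (x2 t - x3 t) * A23 t.
Definition ay1 t := (y2 t - y1 t) * A12 t + (y3 t - y1 t) * A13 t.
Definition ay2 t := (y1 t - y2 t) * A12 t + (y3 t - y2 t) * A23 t.
Definition ay3 t := (y1 t - y3 t) * A13 t + (y2 t - y3 t) * A23 t.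

Section D.
Variable t : R.
Hypothesis ht : 0 < t < 1.
Lemma D1x1 : is_derive t 1 x1 (derive1 x1 t).
Proof. by have [[h _] _] := HN t ht; exact ((sd_is _ _ _ h).1). Qed.
Lemma D1x2 : is_derive t 1 x2 (derive1 x2 t).
Proof. by have [_ [[h _] _]] := HN t ht; exact ((sd_is _ _ _ h).1). Qed.
Lemma D1x3 : is_derive t 1 x3 (derive1 x3 t).
Proof. by have [_ [_ [h _]]] := HN t ht; exact ((sd_is _ _ _ h).1). Qed.
Lemma D1y1 : is_derive t 1 y1 (derive1 y1 t).
Proof. by have [[_ h] _] := HN t ht; exact ((sd_is _ _ _ h).1). Qed.
Lemma D1y2 : is_derive t 1 y2 (derive1 y2 t).
Proof. by have [_ [[_ h] _]] := HN t ht; exact ((sd_is _ _ _ h).1). Qed.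
Lemma D1y3 : is_derive t 1 y3 (derive1 y3 t).
Proof. by have [_ [_ [_ h]]] := HN t ht; exact ((sd_is _ _ _ h).1). Qed.

Lemma D2x1 : is_derive t 1 (derive1 x1) (ax1 t).
Proof.
have [[h _] _] := HN t ht; apply: (is_derive_eq (sd_is _ _ _ h).2).
by rewrite /ax1 /A12 /A13 /r12 /r13 /x1 /x2 /x3 /acc /=.
Qed.
Lemma D2x2 : is_derive t 1 (derive1 x2) (ax2 t).
Proof.
have [_ [[h _] _]] := HN t ht; apply: (is_derive_eq (sd_is _ _ _ h).2).
by rewrite /ax2 /A12 /A23 /r12 /r23 /x1 /x2 /x3 /acc /= (dist_sym (q2 t) (q1 t)).
Qed.
Lemma D2x3 : is_derive t 1 (derive1 x3) (ax3 t).
Proof.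
have [_ [_ [h _]]] := HN t ht; apply: (is_derive_eq (sd_is _ _ _ h).2).
by rewrite /ax3 /A13 /A23 /r13 /r23 /x1 /x2 /x3 /acc /= (dist_sym (q3 t) (q1 t))
  (dist_sym (q3 t) (q2 t)).
Qed.
Lemma D2y1 : is_derive t 1 (derive1 y1) (ay1 t).
Proof.
have [[_ h] _] := HN t ht; apply: (is_derive_eq (sd_is _ _ _ h).2).
by rewrite /ay1 /A12 /A13 /r12 /r13 /y1 /y2 /y3 /acc /=.
Qed.
Lemma D2y2 : is_derive t 1 (derive1 y2) (ay2 t).
Proof.
have [_ [[_ h] _]] := HN t ht; apply: (is_derive_eq (sd_is _ _ _ h).2).
by rewrite /ay2 /A12 /A23 /r12 /r23 /y1 /y2 /y3 /acc /= (dist_sym (q2 t) (q1 t)).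
Qed.
Lemma D2y3 : is_derive t 1 (derive1 y3) (ay3 t).
Proof.
have [_ [_ [_ h]]] := HN t ht; apply: (is_derive_eq (sd_is _ _ _ h).2).
by rewrite /ay3 /A13 /A23 /r13 /r23 /y1 /y2 /y3 /acc /= (dist_sym (q3 t) (q1 t))
  (dist_sym (q3 t) (q2 t)).
Qed.

Lemma ht1 : 0 < t <= 1.
Proof. by case/andP: ht => a b; rewrite a ltW. Qed.

Lemma rpos : [/\ 0 < r12 t, 0 < r13 t & 0 < r23 t].
Proof. by have [a [b c]] := HC t ht1; split; apply: dist_pos. Qed.

Lemma Hpos : 0 < H t.
Proof.
have [a b c] := rpos; rewrite /H; apply: divr_gt0.
  by rewrite !addr_gt0 // ?exprn_gt0 // mulr_gt0.
by rewrite !mulr_gt0 // ?exprn_gt0 // addr_gt0.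
Qed.

Lemma KEY : A13 t = A23 t + H t * (((x2 t - x3 t) ^+ 2 + (y2 t - y3 t) ^+ 2)
   - ((x1 t - x3 t) ^+ 2 + (y1 t - y3 t) ^+ 2)).
Proof.
have [a b c] := rpos.
have e13 : r13 t ^+ 2 = (x1 t - x3 t) ^+ 2 + (y1 t - y3 t) ^+ 2 by rewrite /r13 dist_sq.
have e23 : r23 t ^+ 2 = (x2 t - x3 t) ^+ 2 + (y2 t - y3 t) ^+ 2 by rewrite /r23 dist_sq.
rewrite -e13 -e23 /A13 /A23 /H.
have b0 : r13 t != 0 by rewrite gt_eqF.
have c0 : r23 t != 0 by rewrite gt_eqF.
have bc0 : r13 t + r23 t != 0 by rewrite gt_eqF // addr_gt0.
by field; rewrite ?b0 ?c0 ?bc0 ?expf_neq0 //= ?mulf_neq0 ?expf_neq0.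
Qed.

Lemma cx1 : {for t, continuous x1}. Proof. exact: (der_cont _ _ _ D1x1). Qed.
Lemma cx2 : {for t, continuous x2}. Proof. exact: (der_cont _ _ _ D1x2). Qed.
Lemma cx3 : {for t, continuous x3}. Proof. exact: (der_cont _ _ _ D1x3). Qed.
Lemma cy1 : {for t, continuous y1}. Proof. exact: (der_cont _ _ _ D1y1). Qed.
Lemma cy2 : {for t, continuous y2}. Proof. exact: (der_cont _ _ _ D1y2). Qed.
Lemma cy3 : {for t, continuous y3}. Proof. exact: (der_cont _ _ _ D1y3). Qed.

Ltac cont0 := repeat match goal with
  | |- ct (fun x => x1 x) _ => apply: ctI; exact: cx1
  | |- ct x1 _ => apply: ctI; exact: cx1
  | |- ct (fun x => x2 x) _ => apply: ctI; exact: cx2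
  | |- ct x2 _ => apply: ctI; exact: cx2
  | |- ct (fun x => x3 x) _ => apply: ctI; exact: cx3
  | |- ct x3 _ => apply: ctI; exact: cx3
  | |- ct (fun x => y1 x) _ => apply: ctI; exact: cy1
  | |- ct y1 _ => apply: ctI; exact: cy1
  | |- ct (fun x => y2 x) _ => apply: ctI; exact: cy2
  | |- ct y2 _ => apply: ctI; exact: cy2
  | |- ct (fun x => y3 x) _ => apply: ctI; exact: cy3
  | |- ct y3 _ => apply: ctI; exact: cy3
  | |- ct (fun x => @?a x + @?b x) _ => apply: ctD
  | |- ct (fun x => @?a x * @?b x) _ => apply: ctM
  | |- ct (fun x => - @?a x) _ => apply: ctN
  | |- ct (fun x => @?a x ^+ _) _ => apply: ctX
  | |- ct (fun _ => ?c) _ => apply: ctC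
  end.

Lemma cr12 : {for t, continuous r12}.
Proof.
have -> : r12 = (fun s => Num.sqrt ((x1 s - x2 s) ^+ 2 + (y1 s - y2 s) ^+ 2)) by [].
apply: cS; apply: ctE; cont0.
Qed.
Lemma cr13 : {for t, continuous r13}.
Proof.
have -> : r13 = (fun s => Num.sqrt ((x1 s - x3 s) ^+ 2 + (y1 s - y3 s) ^+ 2)) by [].
apply: cS; apply: ctE; cont0.
Qed.
Lemma cr23 : {for t, continuous r23}.
Proof.
have -> : r23 = (fun s => Num.sqrt ((x2 s - x3 s) ^+ 2 + (y2 s - y3 s) ^+ 2)) by [].
apply: cS; apply: ctE; cont0.
Qed.
Lemma cA12 : {for t, continuous A12}.
Proof.
have [a b c] := rpos; apply: cV; first by rewrite gt_eqF // exprn_gt0.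
apply: cX; exact: cr12.
Qed.
Lemma cA13 : {for t, continuous A13}.
Proof.
have [a b c] := rpos; apply: cV; first by rewrite gt_eqF // exprn_gt0.
apply: cX; exact: cr13.
Qed.
Lemma cA23 : {for t, continuous A23}.
Proof.
have [a b c] := rpos; apply: cV; first by rewrite gt_eqF // exprn_gt0.
apply: cX; exact: cr23.
Qed.
Lemma cH : {for t, continuous H}.
Proof.
have [a b c] := rpos.
have -> : H = (fun s => (r13 s ^+ 2 + r23 s ^+ 2 + r13 s * r23 s) *
  ((r13 s + r23 s) * r13 s ^+ 3 * r23 s ^+ 3)^-1) by [].
apply: cM.
  apply: cD; [apply: cD; apply: cX|apply: cM]; by [exact: cr13|exact: cr23].
apply: cV.
  by rewrite gt_eqF // !mulr_gt0 ?exprn_gt0 // addr_gt0.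
apply: cM; [apply: cM; [apply: cD|apply: cX]|apply: cX]; by [exact: cr13|exact: cr23].
Qed.
End D.

Ltac cont ht := repeat match goal with
  | |- ct (fun x => x1 x) _ => apply: ctI; exact: (cx1 _ ht)
  | |- ct x1 _ => apply: ctI; exact: (cx1 _ ht)
  | |- ct (fun x => x2 x) _ => apply: ctI; exact: (cx2 _ ht)
  | |- ct x2 _ => apply: ctI; exact: (cx2 _ ht)
  | |- ct (fun x => x3 x) _ => apply: ctI; exact: (cx3 _ ht)
  | |- ct x3 _ => apply: ctI; exact: (cx3 _ ht)
  | |- ct (fun x => y1 x) _ => apply: ctI; exact: (cy1 _ ht)
  | |- ct y1 _ => apply: ctI; exact: (cy1 _ ht)
  | |- ct (fun x => y2 x) _ => apply: ctI; exact: (cy2 _ ht)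
  | |- ct y2 _ => apply: ctI; exact: (cy2 _ ht)
  | |- ct (fun x => y3 x) _ => apply: ctI; exact: (cy3 _ ht)
  | |- ct y3 _ => apply: ctI; exact: (cy3 _ ht)
  | |- ct (fun x => A12 x) _ => apply: ctI; exact: (cA12 _ ht)
  | |- ct A12 _ => apply: ctI; exact: (cA12 _ ht)
  | |- ct (fun x => A13 x) _ => apply: ctI; exact: (cA13 _ ht)
  | |- ct A13 _ => apply: ctI; exact: (cA13 _ ht)
  | |- ct (fun x => A23 x) _ => apply: ctI; exact: (cA23 _ ht)
  | |- ct A23 _ => apply: ctI; exact: (cA23 _ ht)
  | |- ct (fun x => H x) _ => apply: ctI; exact: (cH _ ht)
  | |- ct H _ => apply: ctI; exact: (cH _ ht)
  | |- ct (fun x => @?a x + @?b x) _ => apply: ctD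
  | |- ct (fun x => @?a x * @?b x) _ => apply: ctM
  | |- ct (fun x => - @?a x) _ => apply: ctN
  | |- ct (fun x => @?a x ^+ _) _ => apply: ctX
  | |- ct (fun _ => ?c) _ => apply: ctC
  end.

Lemma iso t : 0 < t < 1 -> y1 t = y2 t -> A13 t = A23 t ->
  x1 t + x2 t - x3 t - x3 t = 0.
Proof.
move=> ht e12 eA.
have := KEY t ht; rewrite eA => hk.
have : H t * (((x2 t - x3 t) ^+ 2 + (y2 t - y3 t) ^+ 2)
   - ((x1 t - x3 t) ^+ 2 + (y1 t - y3 t) ^+ 2)) = 0 by lra.
move/eqP; rewrite mulf_eq0 (gt_eqF (Hpos t ht)) /= subr_eq0 e12 => /eqP h.
have [n12 _] := HC t (ht1 t ht).
have nx : x1 t - x2 t != 0.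
  rewrite subr_eq0; apply/eqP => ex; apply: n12.
  move: ex e12; rewrite /x1 /x2 /y1 /y2; by case: (q1 t) (q2 t) => [? ?] [? ?] /= -> ->.
have : (x1 t - x2 t) * (x1 t + x2 t - x3 t - x3 t) = 0.
  have -> : (x1 t - x2 t) * (x1 t + x2 t - x3 t - x3 t) =
    ((x1 t - x3 t) ^+ 2 + (y2 t - y3 t) ^+ 2) - ((x2 t - x3 t) ^+ 2 + (y2 t - y3 t) ^+ 2) by ring.
  by rewrite h subrr.
by move/eqP; rewrite mulf_eq0 (negbTE nx) /= => /eqP.
Qed.

Variables t1 t2 : R.
Hypothesis t1p : 0 < t1.
Hypothesis t12 : t1 < t2.
Hypothesis t21 : t2 <= 1.
Hypothesis HY : forall t : R, t1 <= t <= t2 -> y1 t = y2 t.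

Lemma in_t12 (t : R) : t \in `]t1, t2[ -> 0 < t < 1 /\ t1 <= t <= t2.
Proof.
rewrite in_itv /= => /andP[a b]; split; apply/andP; split.
- exact: lt_trans a.
- exact: lt_le_trans b t21.
- exact: ltW.
- exact: ltW.
Qed.

Lemma nin (t : R) : t \in `]t1, t2[ -> \forall s \near t, s \in `]t1, t2[.
Proof. by move=> h; apply: near_in_itvoo. Qed.

Lemma stepB (t : R) : t \in `]t1, t2[ -> (y3 t - y1 t) * (A13 t - A23 t) = 0.
Proof.
move=> hin; have [ht _] := in_t12 _ hin.
have eqd : \forall s \near t, derive1 y1 s = derive1 y2 s.
  move: (nin _ hin); apply: filterS => s hs.
  rewrite !derive1E; apply: near_eq_derive.
  move: (nin _ hs); apply: filterS => z hz; exact: HY (in_t12 _ hz).2.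
have d1 : is_derive t 1 (derive1 y2) (ay1 t).
  by apply: near_eq_is_derive; first [exact: eqd | exact: (D2y1 t ht)].
have E := deriv_unique _ _ _ _ d1 (D2y2 t ht).
have e := HY t (in_t12 _ hin).2.
move: E; rewrite /ay1 /ay2 e subrr !mul0r !add0r => E.
by rewrite mulrBr E subrr.
Qed.

Hypothesis Lx1 : x1 x @[x --> 1^'-] --> x1 1.
Hypothesis Lx2 : x2 x @[x --> 1^'-] --> x2 1.
Hypothesis Lx3 : x3 x @[x --> 1^'-] --> x3 1.
Hypothesis Ly1 : y1 x @[x --> 1^'-] --> y1 1.
Hypothesis Ly2 : y2 x @[x --> 1^'-] --> y2 1.
Hypothesis Ly3 : y3 x @[x --> 1^'-] --> y3 1.

Lemma t01 (t : R) : 0 < t <= 1 -> t < 1 \/ t = 1.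
Proof. by case/andP=> _; rewrite le_eqVlt => /orP[/eqP ->|->]; [right|left]. Qed.

Theorem core : stays_on_axis (Z1 q1 q2) (fun t => 0 < t <= 1) /\
  stays_on_axis (Z2 q1 q2 q3) (fun t => 0 < t <= 1).
Proof.
case: (pselect (exists t, (t \in `]t1, t2[) /\ y3 t != y1 t)) => [[ts [hts hne]] | hB].
- have [hts01 _] := in_t12 _ hts.
  have hne' : y3 ts - y1 ts != 0 by rewrite subr_eq0.
  have Nz := near_neq0 _ _ (cB _ _ _ (cy3 ts hts01) (cy1 ts hts01)) hne'.
  pose f := fun t => y1 t - y2 t.
  pose fp := fun t => derive1 y1 t - derive1 y2 t.
  pose g := fun t => x1 t + x2 t - x3 t - x3 t.
  pose gp := fun t => derive1 x1 t + derive1 x2 t - derive1 x3 t - derive1 x3 t.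
  pose c11 := fun t => -2 * A12 t - (A13 t + A23 t) / 2 + 2 * (y3 t - (y1 t + y2 t) / 2) ^+ 2 * H t.
  pose c12 := fun t => - (y3 t - (y1 t + y2 t) / 2) * H t * (x1 t - x2 t).
  pose c21 := fun t => -3 * (x1 t - x2 t) * H t * (y3 t - (y1 t + y2 t) / 2).
  pose c22 := fun t => -3 / 2 * (A13 t + A23 t) + 3 / 2 * H t * (x1 t - x2 t) ^+ 2.
  have W0 : \forall s \near ts, f s = 0.
    move: (nin _ hts); apply: filterS => s hs; by rewrite /f HY ?subrr // (in_t12 _ hs).2.
  have U0 : \forall s \near ts, g s = 0.
    have NN : \forall s \near ts, (s \in `]t1, t2[) /\ (y3 s - y1 s != 0).
      near=> s; split.
        by near: s; exact: (nin _ hts).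
      by near: s; exact: Nz.
    move: NN; apply: filterS => s [hs hz].
    have [hs01 hs12] := in_t12 _ hs.
    apply: iso => //; first exact: HY.
    apply/eqP; rewrite -subr_eq0; have := stepB _ hs; move/eqP.
    by rewrite mulf_eq0 (negbTE hz).
  have Df (t : R) : 0 < t < 1 -> is_derive t 1 f (fp t).
    by move=> ht; exact: (is_deriveB (D1y1 t ht) (D1y2 t ht)).
  have Dg (t : R) : 0 < t < 1 -> is_derive t 1 g (gp t).
    move=> ht; exact: (is_deriveB (is_deriveB (is_deriveD (D1x1 t ht) (D1x2 t ht)) (D1x3 t ht)) (D1x3 t ht)).
  have Dfp (t : R) : 0 < t < 1 -> is_derive t 1 fp (c11 t * f t + c12 t * g t).
    move=> ht; apply: (is_derive_eq (is_deriveB (D2y1 t ht) (D2y2 t ht))).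
    rewrite /ay1 /ay2 /c11 /c12 /f /g (KEY t ht); by field.
  have Dgp (t : R) : 0 < t < 1 -> is_derive t 1 gp (c21 t * f t + c22 t * g t).
    move=> ht; apply: (is_derive_eq (is_deriveB (is_deriveB (is_deriveD (D2x1 t ht) (D2x2 t ht)) (D2x3 t ht)) (D2x3 t ht))).
    rewrite /ax1 /ax2 /ax3 /c21 /c22 /f /g (KEY t ht); by field.
  have C11 (t : R) : 0 < t < 1 -> {for t, continuous c11} by move=> ht; apply: ctE; rewrite /c11; cont ht.
  have C12 (t : R) : 0 < t < 1 -> {for t, continuous c12} by move=> ht; apply: ctE; rewrite /c12; cont ht.
  have C21 (t : R) : 0 < t < 1 -> {for t, continuous c21} by move=> ht; apply: ctE; rewrite /c21; cont ht.
  have C22 (t : R) : 0 < t < 1 -> {for t, continuous c22} by move=> ht; apply: ctE; rewrite /c22; cont ht.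
  have f0 : f ts = 0 by exact: (nbhs_singleton W0).
  have g0 : g ts = 0 by exact: (nbhs_singleton U0).
  have fp0 : fp ts = 0 by exact: (deriv_near0 _ _ _ W0 (Df ts hts01)).
  have gp0 : gp ts = 0 by exact: (deriv_near0 _ _ _ U0 (Dg ts hts01)).
  have U := @ulem R f fp g gp c11 c12 c21 c22 ts Df Dg Dfp Dgp C11 C12 C21 C22 hts01 f0 fp0 g0 gp0.
  have f1 : f 1 = 0.
    apply: (lim1_zero f (cvgB Ly1 Ly2)).
    by move=> x hx; exact: (U x hx).1.
  have g1 : g 1 = 0.
    apply: (lim1_zero g (cvgB (cvgB (cvgD Lx1 Lx2) Lx3) Lx3)).
    by move=> x hx; exact: (U x hx).2.
  split; [left|right] => t ht0; case: (t01 _ ht0) => [ht|->].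
  + have ht' : 0 < t < 1 by case/andP: ht0 => a _; rewrite a ht.
    exact ((U t ht').1).
  + exact f1.
  + have ht' : 0 < t < 1 by case/andP: ht0 => a _; rewrite a ht.
    have := (U t ht').2; rewrite /g /Z2 /x1 /x2 /x3 /= => h; lra.
  + move: g1; rewrite /g /Z2 /x1 /x2 /x3 /= => h; lra.
- have hB' (t : R) : t \in `]t1, t2[ -> y3 t = y1 t.
    move=> ht; case: (eqVneq (y3 t) (y1 t)) => // hn; exfalso; apply: hB; by exists t.
  have [m1 m2] := midf_lt t12.
  have hts : (t1 + t2) / 2 \in `]t1, t2[ by rewrite in_itv /= m1 m2.
  move: ((t1 + t2) / 2) hts => ts hts.
  have [hts01 _] := in_t12 _ hts.
  pose f := fun t => y2 t - y1 t.
  pose fp := fun t => derive1 y2 t - derive1 y1 t.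
  pose g := fun t => y3 t - y1 t.
  pose gp := fun t => derive1 y3 t - derive1 y1 t.
  pose c11 := fun t => -2 * A12 t - A23 t.
  pose c12 := fun t => A23 t - A13 t.
  pose c21 := fun t => A23 t - A12 t.
  pose c22 := fun t => -2 * A13 t - A23 t.
  have W0 : \forall s \near ts, f s = 0.
    move: (nin _ hts); apply: filterS => s hs; by rewrite /f HY ?subrr // (in_t12 _ hs).2.
  have U0 : \forall s \near ts, g s = 0.
    move: (nin _ hts); apply: filterS => s hs; by rewrite /g hB' ?subrr.
  have Df (t : R) : 0 < t < 1 -> is_derive t 1 f (fp t).
    by move=> ht; exact: (is_deriveB (D1y2 t ht) (D1y1 t ht)).
  have Dg (t : R) : 0 < t < 1 -> is_derive t 1 g (gp t).
    by move=> ht; exact: (is_deriveB (D1y3 t ht) (D1y1 t ht)).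
  have Dfp (t : R) : 0 < t < 1 -> is_derive t 1 fp (c11 t * f t + c12 t * g t).
    move=> ht; apply: (is_derive_eq (is_deriveB (D2y2 t ht) (D2y1 t ht))).
    rewrite /ay1 /ay2 /c11 /c12 /f /g; ring.
  have Dgp (t : R) : 0 < t < 1 -> is_derive t 1 gp (c21 t * f t + c22 t * g t).
    move=> ht; apply: (is_derive_eq (is_deriveB (D2y3 t ht) (D2y1 t ht))).
    rewrite /ay1 /ay3 /c21 /c22 /f /g; ring.
  have C11 (t : R) : 0 < t < 1 -> {for t, continuous c11} by move=> ht; apply: ctE; rewrite /c11; cont ht.
  have C12 (t : R) : 0 < t < 1 -> {for t, continuous c12} by move=> ht; apply: ctE; rewrite /c12; cont ht.
  have C21 (t : R) : 0 < t < 1 -> {for t, continuous c21} by move=> ht; apply: ctE; rewrite /c21; cont ht.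
  have C22 (t : R) : 0 < t < 1 -> {for t, continuous c22} by move=> ht; apply: ctE; rewrite /c22; cont ht.
  have f0 : f ts = 0 by exact: (nbhs_singleton W0).
  have g0 : g ts = 0 by exact: (nbhs_singleton U0).
  have fp0 : fp ts = 0 by exact: (deriv_near0 _ _ _ W0 (Df ts hts01)).
  have gp0 : gp ts = 0 by exact: (deriv_near0 _ _ _ U0 (Dg ts hts01)).
  have U := @ulem R f fp g gp c11 c12 c21 c22 ts Df Dg Dfp Dgp C11 C12 C21 C22 hts01 f0 fp0 g0 gp0.
  have f1 : f 1 = 0.
    apply: (lim1_zero f (cvgB Ly2 Ly1)).
    by move=> x hx; exact: (U x hx).1.
  have g1 : g 1 = 0.
    apply: (lim1_zero g (cvgB Ly3 Ly1)).
    by move=> x hx; exact: (U x hx).2.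
  split; left => t ht0; case: (t01 _ ht0) => [ht|->].
  + have ht' : 0 < t < 1 by case/andP: ht0 => a _; rewrite a ht.
    have := (U t ht').1; rewrite /f /Z1 /y1 /y2 /= => h; lra.
  + move: f1; rewrite /f /Z1 /y1 /y2 /= => h; lra.
  + have ht' : 0 < t < 1 by case/andP: ht0 => a _; rewrite a ht.
    have := (U t ht').1; have := (U t ht').2.
    rewrite /f /g /Z2 /y1 /y2 /y3 /= => h1 h2; lra.
  + move: f1 g1; rewrite /f /g /Z2 /y1 /y2 /y3 /= => h1 h2; lra.
Unshelve. all: by end_near. Qed.

End Core.

Section Swap.
Context {R : realType}.
Definition sw (q : R -> pt R) : R -> pt R := fun t => ((q t).2, (q t).1).
Lemma dist_sw (a b : pt R) : dist (a.2, a.1) (b.2, b.1) = dist a b.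
Proof. by rewrite /dist /normsq /psub /= addrC. Qed.
Lemma newton_sw (q1 q2 q3 : R -> pt R) (t : R) :
  newton q1 q2 q3 t -> newton (sw q1) (sw q2) (sw q3) t.
Proof.
case=> [[a1 a2] [[b1 b2] [c1 c2]]].
rewrite /newton /newton_at /sw /acc /= !dist_sw.
by split; [split|split; [split|split]]; assumption.
Qed.
Lemma collision_sw (q1 q2 q3 : R -> pt R) (t : R) :
  collision_free_at q1 q2 q3 t -> collision_free_at (sw q1) (sw q2) (sw q3) t.
Proof.
case=> [a [b c]]; rewrite /collision_free_at /sw.
split; [|split] => h; [apply: a|apply: b|apply: c]; move: h;
  by [case: (q1 t) (q2 t) => [? ?] [? ?] [-> ->]
     |case: (q1 t) (q3 t) => [? ?] [? ?] [-> ->]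
     |case: (q2 t) (q3 t) => [? ?] [? ?] [-> ->]].
Qed.
End Swap.

Theorem proposition5p6 (R : realType) (q1 q2 q3 : R -> pt R) :
  action_minimizer q1 q2 q3 ->
  (forall t : R, 0 < t <= 1 -> collision_free_at q1 q2 q3 t) ->
  (forall t : R, 0 < t < 1 -> newton q1 q2 q3 t) ->
  forall t1 t2 : R, 0 < t1 -> t1 < t2 -> t2 <= 1 ->
  stays_on_axis (Z1 q1 q2) (fun t => t1 <= t <= t2) ->
  stays_on_axis (Z1 q1 q2) (fun t => 0 < t <= 1) /\
  stays_on_axis (Z2 q1 q2 q3) (fun t => 0 < t <= 1).
Proof.
move=> [v1 [v2 [v3 [[[h1x h1y] [[h2x h2y] [[h3x h3y] _]]] _]]]] HC HN t1 t2 t1p t12 t21 HZ.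
have L1x := H1_left _ _ h1x; have L1y := H1_left _ _ h1y.
have L2x := H1_left _ _ h2x; have L2y := H1_left _ _ h2y.
have L3x := H1_left _ _ h3x; have L3y := H1_left _ _ h3y.
case: HZ => HZ.
- apply: (core R q1 q2 q3 HC HN t1 t2 t1p t12 t21 _ L1x L2x L3x L1y L2y L3y).
  move=> t ht; have := HZ t ht; rewrite /Z1 /psub /y1 /y2 /= => h; lra.
- have := core R (sw q1) (sw q2) (sw q3) (fun (t : R) h => collision_sw _ _ _ _ (HC t h))
    (fun (t : R) h => newton_sw _ _ _ _ (HN t h)) t1 t2 t1p t12 t21 _ L1y L2y L3y L1x L2x L3x.
  case.
    move=> t ht; have := HZ t ht; rewrite /Z1 /psub /y1 /y2 /sw /= => h; lra.
  move=> A B; split.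
  + by case: A => A; [right|left] => t ht; exact: (A t ht).
  + by case: B => B; [right|left] => t ht; exact: (B t ht).
Qed.
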